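(* For every $c>1$, \[\Delta\theta_{MN}(c):=\int_{\sin^{-1}(1/c)}^{\pi-\sin^{-1}(1/c)}\frac{d\psi}{1-[R^-(c\sin\psi)]^2}<\pi.\]
   Context: Let $K(R)=\frac{\exp(\frac{R^2-1}{2})}{R}$ for $R>0$ (strictly decreasing on $(0,1]$ with $K(1)=1$). For $s\ge1$ let $R^-(s)\in(0,1]$ be the solution of $K(R)=s$ in $(0,1]$. The integral is the change of polar angle along the shrinking curve with energy $c$ (satisfying $K(R)=c\sin\psi$) between its two points with $R=1$, traversed through the part where $R<1$. *)

(* Defs.v *)
From Stdlib Require Import Reals Lra ClassicalEpsilon.
From Coquelicot Require Import Coquelicot.
Open Scope R_scope.

Definition K (r : R) : R := exp ((r ^ 2 - 1) / 2) / r.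

Definition Rminus_sol (s : R) : R :=
  epsilon (inhabits 0) (fun r => 0 < r <= 1 /\ K r = s).

Definition dthetaMN_integrand (c : R) (psi : R) : R :=
  / (1 - (Rminus_sol (c * sin psi)) ^ 2).

(* Main.v *)
Require Import Defs.
From Stdlib Require Import Reals.
From Coquelicot Require Import Coquelicot.
From Stdlib Require Import Lra Psatz ClassicalEpsilon.
Open Scope R_scope.

Definition Tp (y : R) := 1 + y + y^2/2 + y^3/6.
Definition Qp (y : R) := /2 + y/3 + y^2/6.
Definition cA : R := 18/25.
Definition cB : R := 21/50.

Lemma Tp_mono a y : 0 <= a -> a <= y -> Tp a <= Tp y.
Proof. intros. unfold Tp.
  assert (0 <= (y-a)*(1 + (y+a)/2 + (y*y+y*a+a*a)/6)).
  { apply Rmult_le_pos; nra. }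
  nra. Qed.
Lemma Qp_mono a y : 0 <= a -> a <= y -> Qp a <= Qp y.
Proof. intros. unfold Qp. nra. Qed.
Lemma Tp_pos a : 0 <= a -> 0 < Tp a.
Proof. intros. unfold Tp. nra. Qed.
Lemma Qp_pos a : 0 <= a -> 0 < Qp a.
Proof. intros. unfold Qp. nra. Qed.

Lemma poly_int a b y : 0 <= a -> a <= y -> y <= b -> b <= 1 ->
  Qp b + 9/16 <= 2*(3/4)*cA*(1-b)^2*Tp a^3 + cB*a*Tp a*(Qp a + 9/16) ->
  Qp y + 9/16 <= 2*(3/4)*cA*(1-y)^2*Tp y^3 + cB*y*Tp y*(Qp y + 9/16).
Proof.
  intros H0 H1 H2 H3 H.
  assert (T1 := Tp_mono a y H0 H1). assert (T0 := Tp_pos a H0).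
  assert (Q1 := Qp_mono y b ltac:(lra) H2). assert (Q2 := Qp_mono a y H0 H1).
  assert (Q0 := Qp_pos a H0).
  assert (E1 : (1-b)^2 <= (1-y)^2) by nra.
  assert (E2 : Tp a ^3 <= Tp y ^3) by (apply pow_incr; lra).
  assert (E3 : (1-b)^2 * Tp a^3 <= (1-y)^2 * Tp y^3).
  { apply Rmult_le_compat; try lra. apply pow_le; lra. apply pow_le; lra. }
  assert (E4 : a * Tp a <= y * Tp y) by (apply Rmult_le_compat; lra).
  assert (E5 : a * Tp a * (Qp a + 9/16) <= y * Tp y * (Qp y + 9/16)).
  { apply Rmult_le_compat; try lra. apply Rmult_le_pos; lra. }
  unfold cA, cB in *. lra.
Qed.
Lemma poly_all y : 0 <= y <= 1 ->
  Qp y + 9/16 <= 2*(3/4)*cA*(1-y)^2*Tp y^3 + cB*y*Tp y*(Qp y + 9/16).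
Proof.
  intros Hy.
  assert (H : forall a b, 0 <= a -> a <= y -> y <= b -> b <= 1 ->
    Qp b + 9/16 <= 2*(3/4)*cA*(1-b)^2*Tp a^3 + cB*a*Tp a*(Qp a + 9/16) ->
    Qp y + 9/16 <= 2*(3/4)*cA*(1-y)^2*Tp y^3 + cB*y*Tp y*(Qp y + 9/16))
    by (intros; eapply poly_int; eauto).
  destruct (Rle_lt_dec y (1/256)) as [?|?]; [apply (H (0/1) (1/256)); [lra|lra|lra|lra|unfold Qp, Tp, cA, cB; lra]|].
  destruct (Rle_lt_dec y (1/128)) as [?|?]; [apply (H (1/256) (1/128)); [lra|lra|lra|lra|unfold Qp, Tp, cA, cB; lra]|].
  destruct (Rle_lt_dec y (1/64)) as [?|?]; [apply (H (1/128) (1/64)); [lra|lra|lra|lra|unfold Qp, Tp, cA, cB; lra]|].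
  destruct (Rle_lt_dec y (3/128)) as [?|?]; [apply (H (1/64) (3/128)); [lra|lra|lra|lra|unfold Qp, Tp, cA, cB; lra]|].
  destruct (Rle_lt_dec y (1/32)) as [?|?]; [apply (H (3/128) (1/32)); [lra|lra|lra|lra|unfold Qp, Tp, cA, cB; lra]|].
  destruct (Rle_lt_dec y (3/64)) as [?|?]; [apply (H (1/32) (3/64)); [lra|lra|lra|lra|unfold Qp, Tp, cA, cB; lra]|].
  destruct (Rle_lt_dec y (1/16)) as [?|?]; [apply (H (3/64) (1/16)); [lra|lra|lra|lra|unfold Qp, Tp, cA, cB; lra]|].
  destruct (Rle_lt_dec y (3/32)) as [?|?]; [apply (H (1/16) (3/32)); [lra|lra|lra|lra|unfold Qp, Tp, cA, cB; lra]|].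
  destruct (Rle_lt_dec y (1/8)) as [?|?]; [apply (H (3/32) (1/8)); [lra|lra|lra|lra|unfold Qp, Tp, cA, cB; lra]|].
  destruct (Rle_lt_dec y (5/32)) as [?|?]; [apply (H (1/8) (5/32)); [lra|lra|lra|lra|unfold Qp, Tp, cA, cB; lra]|].
  destruct (Rle_lt_dec y (3/16)) as [?|?]; [apply (H (5/32) (3/16)); [lra|lra|lra|lra|unfold Qp, Tp, cA, cB; lra]|].
  destruct (Rle_lt_dec y (1/4)) as [?|?]; [apply (H (3/16) (1/4)); [lra|lra|lra|lra|unfold Qp, Tp, cA, cB; lra]|].
  destruct (Rle_lt_dec y (5/16)) as [?|?]; [apply (H (1/4) (5/16)); [lra|lra|lra|lra|unfold Qp, Tp, cA, cB; lra]|].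
  destruct (Rle_lt_dec y (3/8)) as [?|?]; [apply (H (5/16) (3/8)); [lra|lra|lra|lra|unfold Qp, Tp, cA, cB; lra]|].
  destruct (Rle_lt_dec y (7/16)) as [?|?]; [apply (H (3/8) (7/16)); [lra|lra|lra|lra|unfold Qp, Tp, cA, cB; lra]|].
  destruct (Rle_lt_dec y (1/2)) as [?|?]; [apply (H (7/16) (1/2)); [lra|lra|lra|lra|unfold Qp, Tp, cA, cB; lra]|].
  destruct (Rle_lt_dec y (9/16)) as [?|?]; [apply (H (1/2) (9/16)); [lra|lra|lra|lra|unfold Qp, Tp, cA, cB; lra]|].
  destruct (Rle_lt_dec y (5/8)) as [?|?]; [apply (H (9/16) (5/8)); [lra|lra|lra|lra|unfold Qp, Tp, cA, cB; lra]|].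
  destruct (Rle_lt_dec y (21/32)) as [?|?]; [apply (H (5/8) (21/32)); [lra|lra|lra|lra|unfold Qp, Tp, cA, cB; lra]|].
  destruct (Rle_lt_dec y (11/16)) as [?|?]; [apply (H (21/32) (11/16)); [lra|lra|lra|lra|unfold Qp, Tp, cA, cB; lra]|].
  destruct (Rle_lt_dec y (23/32)) as [?|?]; [apply (H (11/16) (23/32)); [lra|lra|lra|lra|unfold Qp, Tp, cA, cB; lra]|].
  destruct (Rle_lt_dec y (3/4)) as [?|?]; [apply (H (23/32) (3/4)); [lra|lra|lra|lra|unfold Qp, Tp, cA, cB; lra]|].
  destruct (Rle_lt_dec y (49/64)) as [?|?]; [apply (H (3/4) (49/64)); [lra|lra|lra|lra|unfold Qp, Tp, cA, cB; lra]|].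
  destruct (Rle_lt_dec y (25/32)) as [?|?]; [apply (H (49/64) (25/32)); [lra|lra|lra|lra|unfold Qp, Tp, cA, cB; lra]|].
  destruct (Rle_lt_dec y (51/64)) as [?|?]; [apply (H (25/32) (51/64)); [lra|lra|lra|lra|unfold Qp, Tp, cA, cB; lra]|].
  destruct (Rle_lt_dec y (13/16)) as [?|?]; [apply (H (51/64) (13/16)); [lra|lra|lra|lra|unfold Qp, Tp, cA, cB; lra]|].
  destruct (Rle_lt_dec y (53/64)) as [?|?]; [apply (H (13/16) (53/64)); [lra|lra|lra|lra|unfold Qp, Tp, cA, cB; lra]|].
  destruct (Rle_lt_dec y (107/128)) as [?|?]; [apply (H (53/64) (107/128)); [lra|lra|lra|lra|unfold Qp, Tp, cA, cB; lra]|].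
  destruct (Rle_lt_dec y (27/32)) as [?|?]; [apply (H (107/128) (27/32)); [lra|lra|lra|lra|unfold Qp, Tp, cA, cB; lra]|].
  destruct (Rle_lt_dec y (109/128)) as [?|?]; [apply (H (27/32) (109/128)); [lra|lra|lra|lra|unfold Qp, Tp, cA, cB; lra]|].
  destruct (Rle_lt_dec y (55/64)) as [?|?]; [apply (H (109/128) (55/64)); [lra|lra|lra|lra|unfold Qp, Tp, cA, cB; lra]|].
  destruct (Rle_lt_dec y (111/128)) as [?|?]; [apply (H (55/64) (111/128)); [lra|lra|lra|lra|unfold Qp, Tp, cA, cB; lra]|].
  destruct (Rle_lt_dec y (7/8)) as [?|?]; [apply (H (111/128) (7/8)); [lra|lra|lra|lra|unfold Qp, Tp, cA, cB; lra]|].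
  destruct (Rle_lt_dec y (113/128)) as [?|?]; [apply (H (7/8) (113/128)); [lra|lra|lra|lra|unfold Qp, Tp, cA, cB; lra]|].
  destruct (Rle_lt_dec y (57/64)) as [?|?]; [apply (H (113/128) (57/64)); [lra|lra|lra|lra|unfold Qp, Tp, cA, cB; lra]|].
  destruct (Rle_lt_dec y (115/128)) as [?|?]; [apply (H (57/64) (115/128)); [lra|lra|lra|lra|unfold Qp, Tp, cA, cB; lra]|].
  destruct (Rle_lt_dec y (29/32)) as [?|?]; [apply (H (115/128) (29/32)); [lra|lra|lra|lra|unfold Qp, Tp, cA, cB; lra]|].
  destruct (Rle_lt_dec y (117/128)) as [?|?]; [apply (H (29/32) (117/128)); [lra|lra|lra|lra|unfold Qp, Tp, cA, cB; lra]|].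
  destruct (Rle_lt_dec y (59/64)) as [?|?]; [apply (H (117/128) (59/64)); [lra|lra|lra|lra|unfold Qp, Tp, cA, cB; lra]|].
  destruct (Rle_lt_dec y (119/128)) as [?|?]; [apply (H (59/64) (119/128)); [lra|lra|lra|lra|unfold Qp, Tp, cA, cB; lra]|].
  destruct (Rle_lt_dec y (15/16)) as [?|?]; [apply (H (119/128) (15/16)); [lra|lra|lra|lra|unfold Qp, Tp, cA, cB; lra]|].
  destruct (Rle_lt_dec y (61/64)) as [?|?]; [apply (H (15/16) (61/64)); [lra|lra|lra|lra|unfold Qp, Tp, cA, cB; lra]|].
  destruct (Rle_lt_dec y (31/32)) as [?|?]; [apply (H (61/64) (31/32)); [lra|lra|lra|lra|unfold Qp, Tp, cA, cB; lra]|].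
  apply (H (31/32) (1/1)); [lra|lra|lra|lra|unfold Qp, Tp, cA, cB; lra].
Qed.

Lemma exp_cubic y : 0 <= y -> Tp y <= exp y.
Proof.
  intros Hy. pose proof (exp_ge_taylor y 3 Hy) as H.
  unfold Tp. simpl in H. unfold Factorial.fact in H. simpl in H. lra.
Qed.

Lemma sqrt_le_am q k : 0 <= q -> 0 < k -> sqrt q <= (q + k^2)/(2*k).
Proof.
  intros Hq Hk. pose proof (sqrt_sqrt q Hq). pose proof (sqrt_pos q).
  assert (0 <= (sqrt q - k)^2) by (apply pow2_ge_0).
  assert (sqrt q * (2*k) <= q + k^2) by (rewrite <- H at 2; nra).
  apply Rmult_le_reg_r with (2*k); [lra|].
  unfold Rdiv. rewrite Rmult_assoc, Rinv_l; lra.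
Qed.

Lemma pointwise y : 0 < y < 1 ->
  let p := (1-y)*exp y in
  /y <= 1 + cA * p^3 / sqrt (1-p) + cB * p.
Proof.
  intros Hy p.
  pose proof (exp_cubic y ltac:(lra)) as HT.
  pose proof (Tp_pos y ltac:(lra)) as HT0.
  pose proof (Qp_pos y ltac:(lra)) as HQ0.
  set (T := Tp y) in *. set (Q := Qp y) in *.
  set (P := (1-y)*T).
  assert (HP0 : 0 < P) by (unfold P; nra).
  assert (HPp : P <= p) by (unfold P, p; nra).
  assert (Hp1 : p < 1).
  { unfold p. pose proof (exp_ineq1 (-y) ltac:(lra)).
    pose proof (exp_plus y (-y)). replace (y + - y) with 0 in H0 by ring.
    rewrite exp_0 in H0. pose proof (exp_pos y). nra. }
  assert (H1P : 1 - P = y^2 * Q) by (subst P T Q; unfold Tp, Qp; field).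
  assert (Hs1 : sqrt (1-p) <= sqrt (1-P)) by (apply sqrt_le_1; lra).
  assert (Hs2 : sqrt (1-P) = y * sqrt Q).
  { rewrite H1P, sqrt_mult; [|nra|lra]. rewrite sqrt_pow2; lra. }
  assert (Hs3 : sqrt Q <= (Q + (3/4)^2)/(2*(3/4))) by (apply sqrt_le_am; lra).
  assert (Hs0 : 0 < sqrt (1-p)) by (apply sqrt_lt_R0; lra).
  set (S := sqrt (1-p)) in *.
  assert (HS : S <= y * (Q + 9/16) / (3/2)) by nra.
  assert (HPp3 : P^3 <= p^3) by (apply pow_incr; lra).
  assert (Hk : cA * P^3 * (3/2) / (y*(Q + 9/16)) <= cA * p^3 / S).
  { replace (cA * P^3 * (3/2) / (y*(Q + 9/16))) with (cA * P^3 * / (y*(Q + 9/16)/(3/2))) by (field; lra).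
    unfold Rdiv. apply Rmult_le_compat.
    - apply Rmult_le_pos; [unfold cA; lra | apply pow_le; lra].
    - left; apply Rinv_0_lt_compat. apply Rmult_lt_0_compat; [|lra]. nra.
    - apply Rmult_le_compat_l; [unfold cA; lra | lra].
    - apply Rinv_le_contravar; lra. }
  pose proof (poly_all y ltac:(lra)) as Hpoly. fold T Q in Hpoly.
  assert (Hmain : /y <= 1 + cA * P^3 * (3/2) / (y*(Q + 9/16)) + cB * P).
  { assert (Hd : 0 < y * (Q + 9/16)) by nra.
    apply Rmult_le_reg_r with (y * (Q+9/16)); [lra|].
    field_simplify; [|lra|lra].
    unfold P. unfold cA, cB in *.
    assert (H1y : 0 < 1 - y) by lra.
    assert (Hm := Rmult_le_compat_l (1-y) _ _ (Rlt_le _ _ H1y) Hpoly).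
    nra. }
  assert (cB * P <= cB * p) by (apply Rmult_le_compat_l; unfold cB; lra).
  lra.
Qed.

Lemma ball_R (x e y : R) : ball x e y <-> Rabs (y - x) < e.
Proof. reflexivity. Qed.

Lemma K_decr a b : 0 < a -> a < b -> b <= 1 -> K b < K a.
Proof.
  intros Ha Hab Hb. unfold K.
  set (d := b - a).
  assert (E : exp ((b^2-1)/2) = exp ((b^2-a^2)/2) * exp ((a^2-1)/2)).
  { rewrite <- exp_plus. f_equal. field. }
  assert (H1 : exp ((b^2-a^2)/2) < exp d).
  { apply exp_increasing. unfold d. nra. }
  assert (H2 : a * exp d <= b).
  { pose proof (exp_ineq1_le (-d)). pose proof (exp_plus d (-d)).
    replace (d + - d) with 0 in H0 by ring. rewrite exp_0 in H0.
    pose proof (exp_pos d). unfold d in *. nra. }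
  pose proof (exp_pos ((a^2-1)/2)). pose proof (exp_pos ((b^2-a^2)/2)).
  rewrite E. set (X := exp ((a^2-1)/2)) in *. set (Y := exp ((b^2-a^2)/2)) in *.
  replace (Y * X / b) with ((a*Y) * (X/(a*b))) by (field; lra).
  replace (X / a) with (b * (X/(a*b))) by (field; lra).
  apply Rmult_lt_compat_r. apply Rdiv_lt_0_compat; nra. nra.
Qed.

Lemma K_le a b : 0 < a -> a <= b -> b <= 1 -> K b <= K a.
Proof. intros. destruct (Req_dec a b). subst; lra. left; apply K_decr; lra. Qed.

Lemma K_1 : K 1 = 1.
Proof. unfold K. replace ((1^2-1)/2) with 0 by field. rewrite exp_0. field. Qed.

Lemma K_cont r : 0 < r -> continuous K r.
Proof.
  intros Hr. apply (ex_derive_continuous (K:=R_AbsRing) (V:=R_NormedModule)). unfold K. auto_derive. lra.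
Qed.

Lemma Rm_exists s : 1 < s -> exists r, 0 < r <= 1 /\ K r = s.
Proof.
  intros Hs. set (r0 := /(2*s)).
  assert (Hr0 : 0 < r0 < 1).
  { unfold r0. split. apply Rinv_0_lt_compat; lra.
    rewrite <- Rinv_1. apply Rinv_lt_contravar; lra. }
  assert (HK0 : s < K r0).
  { unfold K. pose proof (exp_ineq1_le (-(1/2))).
    assert (exp (-(1/2)) < exp ((r0^2-1)/2)) by (apply exp_increasing; nra).
    replace (exp ((r0^2-1)/2) / r0) with (2*s*exp ((r0^2-1)/2)) by (unfold r0; field; lra).
    nra. }
  destruct (Ranalysis5.IVT_interv (fun r => s - K r) r0 1) as [z [Hz1 Hz2]].
  - intros a Ha. apply continuity_pt_filterlim.
    apply (continuous_minus (fun _ => s) K). apply continuous_const.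
    apply K_cont; lra.
  - lra.
  - lra.
  - rewrite K_1; lra.
  - exists z. split; lra.
Qed.

Lemma Rm_spec s : 1 < s -> 0 < Rminus_sol s < 1 /\ K (Rminus_sol s) = s.
Proof.
  intros Hs. unfold Rminus_sol.
  destruct (epsilon_spec (inhabits 0) (fun r => 0 < r <= 1 /\ K r = s) (Rm_exists s Hs))
    as [[H1 H2] H3].
  set (r := epsilon _ _) in *.
  split; [|exact H3]. split; [lra|].
  destruct H2; [lra|]. rewrite H in H3. rewrite K_1 in H3. lra.
Qed.

Lemma Rm_cont s0 : 1 < s0 -> continuous Rminus_sol s0.
Proof.
  intros Hs0. apply filterlim_locally. intros eps.
  destruct (Rm_spec s0 Hs0) as [[Hr0 Hr1] HK].
  set (r0 := Rminus_sol s0) in *.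
  set (r1 := Rmax (r0 - eps/2) (r0/2)).
  set (r2 := Rmin (r0 + eps/2) ((1+r0)/2)).
  pose proof (cond_pos eps).
  assert (Hr1a : 0 < r1 < r0).
  { unfold r1. apply Rmax_case_strong; intros; lra. }
  assert (Hr1b : r0 - eps/2 <= r1) by apply Rmax_l.
  assert (Hr2a : r0 < r2 < 1).
  { unfold r2. apply Rmin_case_strong; intros; lra. }
  assert (Hr2b : r2 <= r0 + eps/2) by apply Rmin_l.
  assert (K1 : s0 < K r1) by (rewrite <- HK; apply K_decr; lra).
  assert (K2 : K r2 < s0) by (rewrite <- HK; apply K_decr; lra).
  assert (K3 : 1 < K r2) by (rewrite <- K_1; apply K_decr; lra).
  assert (Hd : 0 < Rmin (K r1 - s0) (s0 - K r2)) by (apply Rmin_case; lra).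
  exists (mkposreal _ Hd). intros s Hs. simpl in Hs. rewrite ball_R in Hs.
  assert (Hs1 : Rabs (s - s0) < K r1 - s0) by (eapply Rlt_le_trans; [exact Hs| apply Rmin_l]).
  assert (Hs2 : Rabs (s - s0) < s0 - K r2) by (eapply Rlt_le_trans; [exact Hs| apply Rmin_r]).
  apply Rabs_def2 in Hs1. apply Rabs_def2 in Hs2.
  assert (Hs3 : 1 < s) by lra.
  destruct (Rm_spec s Hs3) as [[Hq0 Hq1] HKq].
  rewrite ball_R.
  assert (r1 < Rminus_sol s).
  { destruct (Rlt_or_le r1 (Rminus_sol s)) as [|Hle]; [assumption|].
    pose proof (K_le (Rminus_sol s) r1 Hq0 Hle ltac:(lra)). lra. }
  assert (Rminus_sol s < r2).
  { destruct (Rlt_or_le (Rminus_sol s) r2) as [|Hle]; [assumption|].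
    pose proof (K_le r2 (Rminus_sol s) ltac:(lra) Hle ltac:(lra)). lra. }
  apply Rabs_def1; lra.
Qed.

Definition mm (c : R) := sqrt (c^2 - 1).
Definition Lam (c : R) := 1 + mm c^2 + 3 * mm c^4 / 8.
Definition cot (x : R) := cos x / sin x.
Definition Wf (c t : R) := 1 + (2*t^2 + 3*mm c^2)/8.
Definition Gf (c t : R) := Lam c * asin (t / mm c) - t * sqrt (mm c^2 - t^2) * Wf c t.
Definition Hf (c x : R) := x - cA / c^5 * Gf c (cot x) - cB / c^2 * cot x.
Definition hf (c x : R) := cA * (1 + cot x^2)^3 / (c^5 * sqrt (mm c^2 - cot x^2)) + cB * (1 + cot x^2) / c^2.

Lemma asin_der x : -1 < x < 1 -> is_derive asin x (/ sqrt (1 - x^2)).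
Proof.
  intros H. apply is_derive_Reals.
  pose proof (derive_pt_asin x H) as E. unfold derive_pt in E.
  destruct (derivable_pt_asin x H) as [l Hl]. simpl in E. subst l.
  replace (/ sqrt (1 - x^2)) with (1 / sqrt (1 - x²)) by (unfold Rsqr; unfold Rdiv; rewrite Rmult_1_l; f_equal; f_equal; f_equal; ring).
  exact Hl.
Qed.

Lemma mm_pos c : 1 < c -> 0 < mm c.
Proof. intros. unfold mm. apply sqrt_lt_R0. nra. Qed.
Lemma mm_sq c : 1 < c -> mm c ^ 2 = c^2 - 1.
Proof. intros. unfold mm. apply pow2_sqrt. nra. Qed.

Lemma deriv_eq (f : R -> R) (x l l' : R) : is_derive f x l -> l = l' -> is_derive f x l'.
Proof. intros H E; subst; exact H. Qed.

Lemma G_der c t : 1 < c -> t^2 < mm c^2 ->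
  is_derive (Gf c) t ((1+t^2)^2 / sqrt (mm c^2 - t^2)).
Proof.
  intros Hc Ht. pose proof (mm_pos c Hc) as Hm.
  set (m := mm c) in *.
  assert (HS : 0 < sqrt (m^2 - t^2)) by (apply sqrt_lt_R0; lra).
  set (S := sqrt (m^2 - t^2)) in *.
  assert (HS2 : S^2 = m^2 - t^2) by (unfold S; apply pow2_sqrt; lra).
  assert (Htm : -1 < t/m < 1).
  { assert (t < m) by nra. assert (-m < t) by nra. split.
    apply Rmult_lt_reg_r with m; [lra|]. field_simplify; lra.
    apply Rmult_lt_reg_r with m; [lra|]. field_simplify; lra. }
  assert (D1 : is_derive (fun t => asin (t/m)) t (scal (/m) (/ sqrt (1 - (t/m)^2)))).
  { apply (is_derive_comp asin (fun t => t/m)). apply asin_der; exact Htm.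
    auto_derive; [auto|ring]. }
  assert (D2 : is_derive (fun t => t * sqrt (m^2 - t^2) * Wf c t) t
                 (S*Wf c t - t*t/S*Wf c t + t*S*(t/2))).
  { unfold Wf. fold m. auto_derive. lra. replace (m*(m*1) + - (t*(t*1))) with (m^2 - t^2) by ring. fold S. field. lra. }
  assert (Hsq : sqrt (1 - (t/m)^2) = S/m).
  { replace (1 - (t/m)^2) with ((S/m)^2) by (unfold Rdiv; rewrite Rpow_mult_distr, HS2; field; lra).
    apply sqrt_pow2. apply Rlt_le, Rdiv_lt_0_compat; lra. }
  unfold Gf. fold m.
  eapply deriv_eq.
  - apply (is_derive_minus (fun t => Lam c * asin (t/m)) (fun t => t * sqrt (m^2 - t^2) * Wf c t)).
    apply is_derive_scal. exact D1. exact D2.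
  - rewrite Hsq. unfold scal; simpl; unfold mult; simpl. unfold minus, plus, opp; simpl.
    unfold Lam, Wf. fold m.
    replace (m^4) with ((m^2)^2) by ring.
    apply Rmult_eq_reg_r with S; [|lra].
    field_simplify; [|lra|lra].
    replace (S^2) with (m^2-t^2) by (rewrite HS2; auto).
    replace (S^4) with ((m^2-t^2)^2) by (rewrite <- HS2; ring).
    field.
Qed.

Lemma cot_der x : 0 < sin x -> is_derive cot x (-(1 + cot x^2)).
Proof.
  intros Hs. unfold cot. auto_derive. lra.
  field. lra.
Qed.

Lemma H_der c x : 1 < c -> 0 < sin x -> cot x ^2 < mm c ^2 ->
  is_derive (Hf c) x (1 + hf c x).
Proof.
  intros Hc Hs Ht.
  assert (DG : is_derive (fun x => Gf c (cot x)) x (scal (-(1 + cot x^2)) ((1+cot x^2)^2 / sqrt (mm c^2 - cot x^2)))).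
  { apply (is_derive_comp (Gf c) cot). apply G_der; auto. apply cot_der; auto. }
  assert (DC := cot_der x Hs).
  unfold Hf. eapply deriv_eq.
  - apply (is_derive_minus (fun x => x - cA / c^5 * Gf c (cot x)) (fun x => cB / c^2 * cot x)).
    apply (is_derive_minus (fun x => x) (fun x => cA / c^5 * Gf c (cot x))).
    apply is_derive_id. apply is_derive_scal. exact DG.
    apply is_derive_scal. exact DC.
  - assert (0 < sqrt (mm c ^ 2 - cot x ^ 2)) by (apply sqrt_lt_R0; lra).
    unfold hf. set (S := sqrt (mm c ^ 2 - cot x ^ 2)) in *.
    unfold scal, minus, plus, opp, one; simpl; unfold mult; simpl.
    field. split; lra.
Qed.

Lemma hf_cont c x : 1 < c -> 0 < sin x -> cot x ^2 < mm c ^2 ->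
  continuous (fun x => 1 + hf c x) x.
Proof.
  intros Hc Hs Ht. apply (ex_derive_continuous (K:=R_AbsRing) (V:=R_NormedModule)).
  assert (0 < sqrt (mm c ^ 2 - cot x ^ 2)) by (apply sqrt_lt_R0; lra).
  assert (0 < c^5) by (apply pow_lt; lra).
  assert (0 < c^2) by (apply pow_lt; lra).
  unfold hf, cot in *. auto_derive. repeat split; try lra.
  replace (mm c * (mm c * 1) + - (cos x * / sin x * (cos x * / sin x * 1))) with (mm c ^ 2 - (cos x / sin x)^2) by (unfold Rdiv; ring).
  simpl in H0. apply Rgt_not_eq, Rmult_lt_0_compat; lra.
Qed.

Lemma asin_nonneg y : 0 <= y -> y <= 1 -> 0 <= asin y.
Proof.
  intros H1 H2. destruct (Rle_or_lt 0 (asin y)) as [|Hn]; [auto|].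
  pose proof (asin_bound y). pose proof (sin_asin y ltac:(lra)).
  assert (sin (asin y) < 0) by (apply sin_lt_0_var; pose proof PI2_3_2; lra). lra.
Qed.

Lemma G_bound c t : 1 < c -> t^2 < mm c^2 ->
  - (Lam c * (PI/2)) <= Gf c t <= Lam c * (PI/2).
Proof.
  intros Hc Ht. pose proof (mm_pos c Hc) as Hm. pose proof PI2_3_2 as Hpi.
  unfold Gf. set (m := mm c) in *.
  assert (HS : 0 < sqrt (m^2 - t^2)) by (apply sqrt_lt_R0; lra).
  assert (HS2 : sqrt (m^2 - t^2)^2 = m^2 - t^2) by (apply pow2_sqrt; lra).
  set (S := sqrt (m^2 - t^2)) in *.
  assert (HW1 : 1 <= Wf c t) by (unfold Wf; fold m; nra).
  assert (HW2 : Wf c t <= 1 + 5*m^2/8) by (unfold Wf; fold m; nra).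
  assert (HtS : Rabs t * S <= m^2/2).
  { assert (0 <= (Rabs t - S)^2) by apply pow2_ge_0.
    assert (Rabs t ^2 = t^2) by (rewrite RPow_abs; apply Rabs_right; nra). nra. }
  assert (HtSW : Rabs t * S * Wf c t <= m^2/2 * (1 + 5*m^2/8)).
  { apply Rmult_le_compat; try lra. apply Rmult_le_pos; [apply Rabs_pos|lra]. }
  assert (HL : m^2/2 * (1 + 5*m^2/8) <= Lam c * (PI/2)).
  { unfold Lam. fold m. assert (0 <= m^2) by nra. nra. }
  pose proof (asin_bound (t/m)) as Hab.
  assert (t < m) by nra. assert (-m < t) by nra.
  destruct (Rle_or_lt 0 t) as [Ht0|Ht0].
  - assert (0 <= asin (t/m)) by (apply asin_nonneg; [apply Rdiv_le_0_compat; lra|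
      apply Rmult_le_reg_r with m; [lra|]; field_simplify; lra]).
    rewrite Rabs_right in HtSW by lra.
    assert (0 <= t * S * Wf c t) by (apply Rmult_le_pos; nra).
    assert (Lam c * asin (t/m) <= Lam c * (PI/2)) by (apply Rmult_le_compat_l; [unfold Lam; fold m; nra|lra]).
    assert (0 <= Lam c * asin (t/m)) by (apply Rmult_le_pos; [unfold Lam; fold m; nra|lra]).
    lra.
  - assert (0 <= asin (-t/m)) by (apply asin_nonneg; [apply Rdiv_le_0_compat; lra|
      apply Rmult_le_reg_r with m; [lra|]; field_simplify; lra]).
    replace (-t/m) with (-(t/m)) in H1 by (field; lra). rewrite asin_opp in H1.
    rewrite Rabs_left in HtSW by lra.
    assert (t * S * Wf c t <= 0) by (assert (0 <= -t * S * Wf c t) by (apply Rmult_le_pos; nra); nra).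
    assert (Lam c * (-(PI/2)) <= Lam c * asin (t/m)) by (apply Rmult_le_compat_l; [unfold Lam; fold m; nra|lra]).
    assert (Lam c * asin (t/m) <= 0) by (assert (0 <= Lam c * (- asin (t/m))) by (apply Rmult_le_pos; [unfold Lam; fold m; nra|lra]); nra).
    lra.
Qed.

Lemma improper (f : R -> R) (al be M : R) :
  al < be ->
  (forall a b, al < a -> a <= b -> b < be -> ex_RInt f a b) ->
  (forall x, al < x < be -> 0 <= f x) ->
  (forall a b, al < a -> a <= b -> b < be -> RInt f a b <= M) ->
  exists v, is_RInt_gen f (at_right al) (at_left be) v /\ v <= M.
Proof.
  intros Hab Hex Hpos Hbd.
  set (E := fun y => exists a b, al < a /\ a <= b /\ b < be /\ y = RInt f a b).
  assert (HEb : bound E).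
  { exists M. intros y [a [b [H1 [H2 [H3 ->]]]]]. apply Hbd; auto. }
  assert (HEn : exists y, E y).
  { exists (RInt f ((al+be)/2) ((al+be)/2)). exists ((al+be)/2), ((al+be)/2). repeat split; lra. }
  destruct (completeness E HEb HEn) as [v [Hub Hlub]].
  exists v. split.
  2: { apply Hlub. intros y [a [b [H1 [H2 [H3 ->]]]]]. apply Hbd; auto. }
  unfold is_RInt_gen. apply filterlimi_locally.
  intros eps.
  assert (Hy : exists y, E y /\ v - eps < y).
  { apply Classical_Prop.NNPP. intros Hn.
    assert (v <= v - eps).
    { apply Hlub. intros y Ey. destruct (Rle_or_lt y (v - eps)); auto.
      exfalso; apply Hn; exists y; auto. }
    pose proof (cond_pos eps). lra. }
  destruct Hy as [y [[a0 [b0 [H1 [H2 [H3 Hy]]]]] Hyv]].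
  apply (Filter_prod _ _ _ (fun a => al < a <= a0) (fun b => b0 <= b < be)).
  - assert (Hd : 0 < a0 - al) by lra.
    exists (mkposreal _ Hd). intros x Hx Hx2. simpl in Hx.
    unfold ball in Hx; simpl in Hx; unfold AbsRing_ball, abs, minus, plus, opp in Hx; simpl in Hx.
    apply Rabs_def2 in Hx. lra.
  - assert (Hd : 0 < be - b0) by lra.
    exists (mkposreal _ Hd). intros x Hx Hx2. simpl in Hx.
    unfold ball in Hx; simpl in Hx; unfold AbsRing_ball, abs, minus, plus, opp in Hx; simpl in Hx.
    apply Rabs_def2 in Hx. lra.
  - intros a b Ha Hb. simpl.
    exists (RInt f a b). split.
    + apply (RInt_correct (V:=R_CompleteNormedModule)). apply Hex; lra.
    + assert (Hz1 : RInt f a b <= v) by (apply Hub; exists a, b; repeat split; lra).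
      assert (Hc : RInt f a b = RInt f a a0 + RInt f a0 b0 + RInt f b0 b).
      { assert (C1 := RInt_Chasles (V:=R_CompleteNormedModule) f a a0 b0 ltac:(apply Hex; lra) ltac:(apply Hex; lra)).
        assert (C2 := RInt_Chasles (V:=R_CompleteNormedModule) f a b0 b ltac:(apply Hex; lra) ltac:(apply Hex; lra)).
        unfold plus in C1, C2; simpl in C1, C2. lra. }
      assert (0 <= RInt f a a0) by (apply RInt_ge_0; [lra|apply Hex; lra|intros; apply Hpos; lra]).
      assert (0 <= RInt f b0 b) by (apply RInt_ge_0; [lra|apply Hex; lra|intros; apply Hpos; lra]).
      unfold ball; simpl; unfold AbsRing_ball, abs, minus, plus, opp; simpl.
      apply Rabs_def1; lra.
Qed.

Lemma PI_ub : PI <= 16/5.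
Proof.
  pose proof (PI_2_3_7_ineq 1) as [_ H].
  unfold tg_alt, PI_2_3_7_tg, Ratan_seq in H. simpl in H. lra.
Qed.

Lemma asin_lb x : 0 <= x <= 1 -> x + x^3/6 + 3*x^5/40 <= asin x.
Proof.
  intros Hx. set (th := asin x).
  assert (Hth : 0 <= th) by (apply asin_nonneg; lra).
  assert (Hs : sin th = x) by (apply sin_asin; lra).
  set (F := fun t => t - sin t - sin t ^3/6 - 3 * sin t^5/40).
  set (dF := fun t => 1 - cos t * (1 + sin t^2/2 + 3 * sin t^4/8)).
  assert (HdF : forall t, 0 <= dF t).
  { intros t. unfold dF. pose proof (sin2_cos2 t). unfold Rsqr in H.
    pose proof (COS_bound t). set (C := cos t) in *. set (S := sin t) in *.
    assert (HS2 : S*S = 1 - C*C) by lra.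
    assert (E : 1 - C * (1 + S^2/2 + 3*S^4/8) = (1-C)^3 * (3*C^2/8 + 9*C/8 + 1)).
    { replace (S^4) with ((S*S)*(S*S)) by ring. replace (S^2) with (S*S) by ring. rewrite HS2. field. }
    rewrite E. apply Rmult_le_pos. apply pow_le; lra. nra. }
  destruct (MVT_gen F 0 th dF) as [xi [Hxi HF]].
  - intros t _. unfold F, dF. auto_derive; auto. field.
  - intros t _. apply continuity_pt_filterlim. apply (ex_derive_continuous (K:=R_AbsRing) (V:=R_NormedModule)). unfold F. auto_derive. auto.
  - unfold F in HF. rewrite sin_0, Hs in HF.
    assert (0 <= dF xi * (th - 0)) by (apply Rmult_le_pos; [apply HdF|lra]).
    simpl in HF. lra.
Qed.
Definition Lw (w : R) := 1 + w/6 + 3*w^2/40 - (18/25)*(8/5)*(w + 3*(1-w)^2/8).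
Lemma p2a w : 0 <= w <= 1 -> 0 < Lw w.
Proof. intros. unfold Lw. nra. Qed.
Lemma Lw_decr a b : 0 <= a -> a <= b -> b <= 1 -> Lw b <= Lw a.
Proof. intros. unfold Lw. nra. Qed.
Lemma p2_int a b w : 0 <= a -> a <= w -> w <= b -> b <= 1 ->
  (21/50)^2*(1-a) < Lw b ^2 -> (21/50)^2*(1-w) < Lw w ^2.
Proof.
  intros. pose proof (Lw_decr w b ltac:(lra) ltac:(lra) ltac:(lra)).
  pose proof (p2a b ltac:(lra)).
  assert (Lw b ^2 <= Lw w ^2) by (apply pow_incr; lra). nra.
Qed.
Lemma p2b w : 0 <= w <= 1 -> (21/50)^2*(1-w) < Lw w ^2.
Proof.
  intros Hw.
  assert (H := fun a b => p2_int a b w).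
  destruct (Rle_lt_dec w (1/4)) as [?|?]; [apply (H (0) (1/4)); [lra|lra|lra|lra|unfold Lw; lra]|].
  destruct (Rle_lt_dec w (1/2)) as [?|?]; [apply (H (1/4) (1/2)); [lra|lra|lra|lra|unfold Lw; lra]|].
  destruct (Rle_lt_dec w (5/8)) as [?|?]; [apply (H (1/2) (5/8)); [lra|lra|lra|lra|unfold Lw; lra]|].
  destruct (Rle_lt_dec w (3/4)) as [?|?]; [apply (H (5/8) (3/4)); [lra|lra|lra|lra|unfold Lw; lra]|].
  destruct (Rle_lt_dec w (13/16)) as [?|?]; [apply (H (3/4) (13/16)); [lra|lra|lra|lra|unfold Lw; lra]|].
  destruct (Rle_lt_dec w (7/8)) as [?|?]; [apply (H (13/16) (7/8)); [lra|lra|lra|lra|unfold Lw; lra]|].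
  destruct (Rle_lt_dec w (29/32)) as [?|?]; [apply (H (7/8) (29/32)); [lra|lra|lra|lra|unfold Lw; lra]|].
  destruct (Rle_lt_dec w (15/16)) as [?|?]; [apply (H (29/32) (15/16)); [lra|lra|lra|lra|unfold Lw; lra]|].
  destruct (Rle_lt_dec w (31/32)) as [?|?]; [apply (H (15/16) (31/32)); [lra|lra|lra|lra|unfold Lw; lra]|].
  apply (H (31/32) (1)); [lra|lra|lra|lra|unfold Lw; lra].
Qed.

Lemma final_ineq c : 1 < c -> cA / c^5 * (Lam c * (PI/2)) + cB / c^2 * mm c < asin (/c).
Proof.
  intros Hc. set (x := /c).
  assert (Hx : 0 < x < 1).
  { unfold x. split. apply Rinv_0_lt_compat; lra. rewrite <- Rinv_1. apply Rinv_lt_contravar; lra. }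
  assert (Hcx : c = /x) by (unfold x; rewrite Rinv_inv; auto).
  set (w := x^2).
  assert (Hw : 0 < w < 1) by (unfold w; nra).
  assert (Hs0 : 0 <= sqrt (1 - w)) by apply sqrt_pos.
  assert (Hs2 : sqrt (1-w) ^2 = 1 - w) by (apply pow2_sqrt; lra).
  set (s := sqrt (1 - w)) in *.
  assert (Hm : mm c = s / x).
  { unfold mm. rewrite <- (sqrt_pow2 (s/x)). f_equal. rewrite Hcx. unfold Rdiv.
    rewrite Rpow_mult_distr, Hs2. unfold w. field. lra.
    apply Rdiv_le_0_compat; lra. }
  assert (HL : cA / c^5 * Lam c = cA * x * (w + 3*(1-w)^2/8)).
  { unfold Lam. replace (mm c ^4) with ((mm c^2)^2) by ring. rewrite mm_sq by lra.
    rewrite Hcx. unfold w. field. lra. }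
  assert (HB : cB / c^2 * mm c = cB * x * s).
  { rewrite Hm, Hcx. field. lra. }
  assert (Has := asin_lb x ltac:(lra)).
  fold x. replace (cA / c^5 * (Lam c * (PI/2))) with (cA / c^5 * Lam c * (PI/2)) by ring.
  rewrite HL, HB.
  pose proof PI_ub. pose proof PI_RGT_0.
  pose proof (p2a w ltac:(lra)). pose proof (p2b w ltac:(lra)).
  assert (Hsl : cB * s < Lw w).
  { destruct (Rlt_or_le (cB * s) (Lw w)); auto.
    assert (Lw w ^2 <= (cB*s)^2) by (apply pow_incr; lra).
    assert ((cB*s)^2 = cB^2 * (1-w)) by (rewrite <- Hs2; ring). unfold cB in *. lra. }
  assert (Hpi : cA * x * (w + 3*(1-w)^2/8) * (PI/2) <= cA * x * (w + 3*(1-w)^2/8) * (8/5)).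
  { apply Rmult_le_compat_l. apply Rmult_le_pos. unfold cA; nra. nra. lra. }
  assert (Hx5 : x^3 = x * w) by (unfold w; ring).
  assert (Hx5' : x^5 = x * w^2) by (unfold w; ring).
  rewrite Hx5, Hx5' in Has.
  unfold Lw in Hsl. unfold cA in *.
  assert (x * (cB * s) < x * (1 + w/6 + 3*w^2/40 - 18/25*(8/5)*(w + 3*(1-w)^2/8))) by (apply Rmult_lt_compat_l; lra).
  nra.
Qed.

Lemma sin_gt c psi : 1 < c -> asin (/c) < psi < PI - asin (/c) -> /c < sin psi.
Proof.
  intros Hc Hp. set (al := asin (/c)) in *.
  assert (Hx : 0 < /c < 1).
  { split. apply Rinv_0_lt_compat; lra. rewrite <- Rinv_1. apply Rinv_lt_contravar; lra. }
  assert (Hal : 0 <= al) by (apply asin_nonneg; lra).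
  assert (Hal2 : al < PI/2) by (apply asin_bound_lt; lra).
  assert (Hs : sin al = /c) by (apply sin_asin; lra).
  destruct (Rle_or_lt psi (PI/2)).
  - rewrite <- Hs. apply sin_increasing_1; lra.
  - rewrite <- sin_PI_x. rewrite <- Hs. apply sin_increasing_1; lra.
Qed.

Lemma dom_facts c psi : 1 < c -> /c < sin psi ->
  0 < sin psi /\ 1 < c * sin psi /\ cot psi ^2 < mm c ^2.
Proof.
  intros Hc Hs.
  assert (0 < /c) by (apply Rinv_0_lt_compat; lra).
  assert (H1 : 1 < c * sin psi).
  { replace 1 with (c * /c) by (field; lra). apply Rmult_lt_compat_l; lra. }
  split; [lra|split; [auto|]].
  rewrite mm_sq by lra. unfold cot. pose proof (sin2_cos2 psi). unfold Rsqr in H0.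
  assert (0 < sin psi) by lra.
  apply Rmult_lt_reg_r with (sin psi ^2). apply pow_lt; lra.
  replace ((cos psi / sin psi)^2 * sin psi ^2) with (cos psi ^2) by (field; lra).
  nra.
Qed.

Lemma integrand_cont c psi : 1 < c -> 1 < c * sin psi -> continuous (dthetaMN_integrand c) psi.
Proof.
  intros Hc Hs. unfold dthetaMN_integrand.
  destruct (Rm_spec _ Hs) as [[Hr0 Hr1] _].
  apply (continuous_Rinv_comp (fun psi => 1 - Rminus_sol (c * sin psi) ^2)).
  2: { assert (Rminus_sol (c * sin psi) ^2 < 1) by nra. lra. }
  apply (continuous_comp (fun psi => Rminus_sol (c * sin psi)) (fun r => 1 - r^2)).
  - apply (continuous_comp (fun psi => c * sin psi) Rminus_sol).
    + apply (ex_derive_continuous (K:=R_AbsRing) (V:=R_NormedModule)). auto_derive. auto.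
    + apply Rm_cont. auto.
  - apply (ex_derive_continuous (K:=R_AbsRing) (V:=R_NormedModule)). auto_derive. auto.
Qed.

Lemma integrand_bound c psi : 1 < c -> /c < sin psi ->
  dthetaMN_integrand c psi <= 1 + hf c psi.
Proof.
  intros Hc Hs. destruct (dom_facts c psi Hc Hs) as [Hs0 [Hcs Hct]].
  destruct (Rm_spec _ Hcs) as [[Hr0 Hr1] HK].
  set (r := Rminus_sol (c * sin psi)) in *.
  unfold dthetaMN_integrand. fold r.
  set (y := 1 - r^2).
  assert (Hy : 0 < y < 1) by (unfold y; nra).
  pose proof (pointwise y Hy) as Hpw. cbv zeta in Hpw.
  set (p := (1 - y) * exp y) in *.
  assert (Hc0 : 0 < c) by lra.
  assert (Hp : p = (1 + cot psi ^2) / c^2).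
  { unfold p, y. replace (1 - (1 - r^2)) with (r^2) by ring.
    unfold K in HK.
    assert (E1 : exp ((r^2-1)/2) ^2 = exp (r^2 - 1)).
    { replace (exp ((r^2-1)/2) ^2) with (exp ((r^2-1)/2) * exp ((r^2-1)/2)) by ring.
      rewrite <- exp_plus. f_equal. field. }
    assert (E2 : exp (1 - r^2) * exp (r^2 - 1) = 1).
    { rewrite <- exp_plus. replace (1 - r^2 + (r^2 - 1)) with 0 by ring. apply exp_0. }
    assert (E3 : exp (r^2-1) = (c * sin psi)^2 * r^2).
    { rewrite <- E1, <- HK. field. lra. }
    unfold cot. pose proof (sin2_cos2 psi). unfold Rsqr in H.
    assert (E4 : exp (1 - r^2) = / ((c * sin psi)^2 * r^2)).
    { rewrite <- E3. apply Rmult_eq_reg_r with (exp (r^2-1)). rewrite E2, Rinv_l. auto.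
      pose proof (exp_pos (r^2-1)). lra. pose proof (exp_pos (r^2-1)). lra. }
    rewrite E4. field_simplify; [| split; lra | repeat split; lra].
    replace (sin psi ^2 + cos psi ^2) with 1 by (simpl; lra). reflexivity. }
  assert (Hp1 : p < 1).
  { rewrite Hp. unfold cot in *. apply Rmult_lt_reg_r with (c^2). apply pow_lt; lra.
    unfold Rdiv. rewrite Rmult_assoc, Rinv_l. 2: apply pow_nonzero; lra.
    rewrite mm_sq in Hct by lra. lra. }
  assert (HS : 0 < sqrt (mm c ^2 - cot psi ^2)) by (apply sqrt_lt_R0; lra).
  assert (Hsq : sqrt (1 - p) = sqrt (mm c ^2 - cot psi ^2) / c).
  { rewrite <- (sqrt_pow2 (sqrt (mm c ^2 - cot psi ^2) / c)).
    2: { apply Rlt_le, Rdiv_lt_0_compat; lra. }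
    f_equal. unfold Rdiv. rewrite Rpow_mult_distr, pow2_sqrt by lra.
    rewrite Hp, mm_sq by lra. field. lra. }
  rewrite Hsq, Hp in Hpw. unfold hf.
  replace (cA * ((1 + cot psi ^2)/c^2)^3 / (sqrt (mm c ^2 - cot psi ^2) / c))
    with (cA * (1 + cot psi ^2)^3 / (c^5 * sqrt (mm c ^2 - cot psi ^2))) in Hpw by (field; lra).
  replace (cB * ((1 + cot psi ^2)/c^2)) with (cB * (1 + cot psi ^2) / c^2) in Hpw by (field; lra).
  lra.
Qed.

Lemma Hf_bounds c x : 1 < c -> 0 < sin x -> cot x ^2 < mm c ^2 ->
  x - cA / c^5 * (Lam c * (PI/2)) - cB / c^2 * mm c <= Hf c x <=
  x + cA / c^5 * (Lam c * (PI/2)) + cB / c^2 * mm c.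
Proof.
  intros Hc Hs Ht. pose proof (G_bound c (cot x) Hc Ht) as [G1 G2].
  pose proof (mm_pos c Hc).
  assert (cot x <= mm c) by nra. assert (- mm c <= cot x) by nra.
  assert (HA : 0 < cA / c^5) by (unfold cA; apply Rdiv_lt_0_compat; [lra|apply pow_lt; lra]).
  assert (HB : 0 < cB / c^2) by (unfold cB; apply Rdiv_lt_0_compat; [lra|apply pow_lt; lra]).
  unfold Hf. split.
  - assert (cA / c^5 * Gf c (cot x) <= cA / c^5 * (Lam c * (PI/2))) by (apply Rmult_le_compat_l; lra).
    assert (cB / c^2 * cot x <= cB / c^2 * mm c) by (apply Rmult_le_compat_l; lra).
    lra.
  - assert (cA / c^5 * (-(Lam c * (PI/2))) <= cA / c^5 * Gf c (cot x)) by (apply Rmult_le_compat_l; lra).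
    assert (cB / c^2 * (- mm c) <= cB / c^2 * cot x) by (apply Rmult_le_compat_l; lra).
    lra.
Qed.

Theorem mainTheorem10 (c : R) (hc : 1 < c) :
  exists v : R,
    is_RInt_gen (dthetaMN_integrand c)
      (at_right (asin (/ c))) (at_left (PI - asin (/ c))) v
    /\ v < PI.
Proof.
  set (al := asin (/c)). set (be := PI - al).
  assert (Hx : 0 < /c < 1).
  { split. apply Rinv_0_lt_compat; lra. rewrite <- Rinv_1. apply Rinv_lt_contravar; lra. }
  assert (Hal : 0 <= al) by (apply asin_nonneg; lra).
  assert (Hal2 : al < PI/2) by (apply asin_bound_lt; lra).
  assert (Hab : al < be) by (unfold be; lra).
  assert (Hdom : forall z, al < z < be -> 0 < sin z /\ 1 < c * sin z /\ cot z ^2 < mm c ^2).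
  { intros z Hz. apply dom_facts; auto. apply sin_gt; auto. }
  set (Bd := cA / c^5 * (Lam c * (PI/2)) + cB / c^2 * mm c).
  destruct (improper (dthetaMN_integrand c) al be ((be + Bd) - (al - Bd))) as [v [Hv HvM]].
  - exact Hab.
  - intros a b Ha Hab' Hb. apply (ex_RInt_continuous (V:=R_CompleteNormedModule)). intros z Hz.
    rewrite Rmin_left in Hz by lra. rewrite Rmax_right in Hz by lra.
    destruct (Hdom z ltac:(lra)) as [_ [H1 _]]. apply integrand_cont; auto.
  - intros z Hz. destruct (Hdom z Hz) as [_ [H1 _]].
    destruct (Rm_spec _ H1) as [[Hr0 Hr1] _].
    unfold dthetaMN_integrand. left. apply Rinv_0_lt_compat. nra.
  - intros a b Ha Hab' Hb.
    assert (HI : is_RInt (fun x => 1 + hf c x) a b (minus (Hf c b) (Hf c a))).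
    { apply (is_RInt_derive (Hf c) (fun x => 1 + hf c x)).
      - intros z Hz. rewrite Rmin_left in Hz by lra. rewrite Rmax_right in Hz by lra.
        destruct (Hdom z ltac:(lra)) as [H0 [_ H2]]. apply H_der; auto.
      - intros z Hz. rewrite Rmin_left in Hz by lra. rewrite Rmax_right in Hz by lra.
        destruct (Hdom z ltac:(lra)) as [H0 [_ H2]]. apply hf_cont; auto. }
    assert (Hle : RInt (dthetaMN_integrand c) a b <= RInt (fun x => 1 + hf c x) a b).
    { apply RInt_le. lra.
      - apply (ex_RInt_continuous (V:=R_CompleteNormedModule)). intros z Hz.
        rewrite Rmin_left in Hz by lra. rewrite Rmax_right in Hz by lra.
        destruct (Hdom z ltac:(lra)) as [_ [H1 _]]. apply integrand_cont; auto.
      - exists (minus (Hf c b) (Hf c a)). exact HI.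
      - intros z Hz. apply integrand_bound; auto. apply sin_gt; auto. unfold be in *; fold al; lra. }
    rewrite (is_RInt_unique _ _ _ _ HI) in Hle.
    unfold minus, plus, opp in Hle; simpl in Hle.
    destruct (Hdom a ltac:(lra)) as [Ha0 [_ Ha2]].
    destruct (Hdom b ltac:(lra)) as [Hb0 [_ Hb2]].
    pose proof (Hf_bounds c a hc Ha0 Ha2). pose proof (Hf_bounds c b hc Hb0 Hb2).
    unfold Bd. lra.
  - exists v. split; auto.
    pose proof (final_ineq c hc). fold al in H. unfold be in HvM. unfold Bd in HvM. lra.
Qed.
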